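(* Let $n\le N$ and let $\boldsymbol A$ be an $n\times N$ random matrix with independent entries, each equal to $1$ with probability $p$ and to $-\tilde\sigma_p^2=-p/(1-p)$ with probability $1-p$, where $p$ is bounded away from $1$ and $n\ge C_0\log N$ for a sufficiently large constant $C_0$. Let $n_j$ be the number of entries equal to $1$ in column $j$ of $\boldsymbol A$, and define $\tilde{\boldsymbol A}$ by $\tilde A_{ij}=1$ if $A_{ij}=1$ and $\tilde A_{ij}=-n_j/(n-n_j)$ if $A_{ij}=-\tilde\sigma_p^2$. Then there are constants $c_1,c_2>0$ such that $$ \Pr\left(\|\boldsymbol A-\tilde{\boldsymbol A}\|\ge c_1\max\left\{\sqrt{\tilde\sigma_p^2N}\log N,\ (\log N)^{3/2}\right\}\right)\le c_2N^{-5}. $$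
   Context: $\|\cdot\|$ denotes the spectral norm. Parameters $n,p$ may depend on $N$; constants are independent of $N$. (If $n_j=n$ the column of $\tilde{\boldsymbol A}$ has no entries of the second type, so the definition is well posed.) *)

(* Defs.v *)
From HB Require Import structures.
From mathcomp Require Import all_boot.
From Stdlib Require Import Reals ClassicalEpsilon.

Set Implicit Arguments.
Unset Strict Implicit.
Unset Printing Implicit Defensive.

Definition rsum (I : finType) (F : I -> R) : R := \big[Rplus/0%R]_(i : I) F i.

(* sample space: w (i,j) = true  iff  A_ij = 1 *)
Definition config (n N : nat) := {ffun 'I_n * 'I_N -> bool}.

Definition weight (n N : nat) (p : R) (w : config n N) : R :=
  \big[Rmult/1%R]_(k : 'I_n * 'I_N) (if w k then p else (1 - p)%R).

Definition prob (n N : nat) (p : R) (E : config n N -> Prop) : R :=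
  rsum (fun w : config n N =>
          if excluded_middle_informative (E w) then weight p w else 0%R).

Definition sigma2 (p : R) : R := (p / (1 - p))%R.

Definition Amat (n N : nat) (p : R) (w : config n N) (i : 'I_n) (j : 'I_N) : R :=
  if w (i, j) then 1%R else (- sigma2 p)%R.

Definition ncol (n N : nat) (w : config n N) (j : 'I_N) : nat :=
  #|[pred i : 'I_n | w (i, j)]|.

Definition Atil (n N : nat) (w : config n N) (i : 'I_n) (j : 'I_N) : R :=
  if w (i, j) then 1%R
  else (- (INR (ncol w j) / (INR n - INR (ncol w j))))%R.

Definition opnorm_set (n N : nat) (M : 'I_n -> 'I_N -> R) (r : R) : Prop :=
  exists x : 'I_N -> R,
    rsum (fun j => (x j ^ 2)%R) = 1%R /\
    r = sqrt (rsum (fun i => (rsum (fun j => (M i j * x j)%R)) ^ 2)%R).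

Definition opnorm (n N : nat) (M : 'I_n -> 'I_N -> R) : R :=
  epsilon (inhabits 0%R) (fun s => is_lub (opnorm_set M) s).

(* Main.v *)
Require Import Defs.
From HB Require Import structures.
From mathcomp Require Import all_boot.
From Stdlib Require Import Reals Lra Lia Psatz ClassicalEpsilon.
Open Scope R_scope.
Ltac dem := repeat match goal with |- context[excluded_middle_informative ?P] => destruct (excluded_middle_informative P); cbn [is_left] end.
Set Implicit Arguments.
Unset Strict Implicit.

HB.instance Definition _ := Monoid.isComLaw.Build R 0%R Rplus (fun a b c => esym (Rplus_assoc a b c)) Rplus_comm Rplus_0_l.
HB.instance Definition _ := Monoid.isComLaw.Build R 1%R Rmult (fun a b c => esym (Rmult_assoc a b c)) Rmult_comm Rmult_1_l.
HB.instance Definition _ := Monoid.isMulLaw.Build R 0%R Rmult Rmult_0_l Rmult_0_r.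
HB.instance Definition _ := Monoid.isAddLaw.Build R Rmult Rplus Rmult_plus_distr_r Rmult_plus_distr_l.

Lemma rsum_le (I : finType) (F G : I -> R) : (forall i, F i <= G i) -> rsum F <= rsum G.
Proof.
move=> H; rewrite /rsum; elim/big_ind2: _ => //; [lra| move=> *; lra].
Qed.
Lemma rsum_ge0 (I : finType) (F : I -> R) : (forall i, 0 <= F i) -> 0 <= rsum F.
Proof. move=> H; rewrite /rsum; elim/big_ind: _ => //; [lra| move=> *; lra]. Qed.
Lemma rsumD (I : finType) (F G : I -> R) : rsum (fun i => F i + G i) = rsum F + rsum G.
Proof. exact: big_split. Qed.
Lemma rsumZ (I : finType) (a : R) (F : I -> R) : rsum (fun i => a * F i) = a * rsum F.
Proof. by rewrite /rsum big_distrr. Qed.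
Lemma rsum_const (n : nat) (c : R) : rsum (fun _ : 'I_n => c) = INR n * c.
Proof.
rewrite /rsum big_const_ord; elim: n => [|n IH] /=; first lra.
rewrite IH; case: n {IH} => [|n] /=; lra.
Qed.
Lemma rsum_ext (I : finType) (F G : I -> R) : (forall i, F i = G i) -> rsum F = rsum G.
Proof. by move=> H; apply: eq_bigr. Qed.
Lemma rsumZr (I : finType) (a : R) (F : I -> R) : rsum (fun i => F i * a) = rsum F * a.
Proof. rewrite (rsum_ext (G := fun i => a * F i)); last by move=> i; ring. rewrite rsumZ; ring. Qed.

Lemma cauchy_schwarz (I : finType) (a x : I -> R) :
  (rsum (fun j => a j * x j))^2 <= rsum (fun j => a j ^2) * rsum (fun j => x j ^ 2).
Proof.
have H0 : 0 <= rsum (fun j => rsum (fun k => (a j * x k - a k * x j)^2)).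
  by apply: rsum_ge0 => j; apply: rsum_ge0 => k; apply: pow2_ge_0.
have E : rsum (fun j => rsum (fun k => (a j * x k - a k * x j)^2)) =
   2 * (rsum (fun j => a j ^2) * rsum (fun j => x j ^ 2)) - 2 * (rsum (fun j => a j * x j))^2.
  rewrite (rsum_ext (G := fun j => a j ^ 2 * rsum (fun k => x k ^2) + x j ^ 2 * rsum (fun k => a k ^2)
                         + (-2 * (a j * x j)) * rsum (fun k => a k * x k))); last first.
    move=> j; rewrite -!rsumZ -!rsumD; apply: rsum_ext => k; ring.
  rewrite !rsumD !rsumZr rsumZ; ring.
lra.
Qed.

Lemma opnorm_le (n N : nat) (M : 'I_n -> 'I_N -> R) (B : R) :
  leq 1 N -> 0 <= B -> rsum (fun i => rsum (fun j => M i j ^ 2)) <= B ^ 2 -> opnorm M <= B.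
Proof.
move=> HN HB HS.
have Hub : is_upper_bound (opnorm_set M) B.
  move=> r [x [Hx ->]].
  rewrite -(sqrt_pow2 B HB); apply: sqrt_le_1_alt.
  apply: Rle_trans HS; apply: rsum_le => i.
  have := cauchy_schwarz (M i) x; rewrite Hx Rmult_1_r; lra.
have Hne : exists r, opnorm_set M r.
  pose j0 := Ordinal HN.
  exists (sqrt (rsum (fun i => (rsum (fun j => (M i j * (if j == j0 then 1 else 0)))) ^ 2))).
  exists (fun j => if j == j0 then 1 else 0); split => //.
  rewrite /rsum (bigD1 j0) //= big1; first lra.
  by move=> j /negbTE ->; rewrite /=; ring.
have [m Hm] := completeness _ (ex_intro _ B Hub) Hne.
have Hl : is_lub (opnorm_set M) (opnorm M).
  by rewrite /opnorm; apply: epsilon_spec; exists m.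
by apply Hl.
Qed.

Lemma prod_le (I : finType) (F G : I -> R) :
  (forall i, 0 <= F i <= G i) -> 0 <= \big[Rmult/1]_(i : I) F i <= \big[Rmult/1]_(i : I) G i.
Proof.
move=> H; elim/big_ind2: _ => //; first lra.
move=> x1 x2 y1 y2 [? ?] [? ?]; split; [nra|nra].
Qed.

Lemma exp_rsum (I : finType) (F : I -> R) : exp (rsum F) = \big[Rmult/1]_(i : I) exp (F i).
Proof. by rewrite /rsum; apply: (big_morph exp exp_plus exp_0). Qed.

Section Prob.
Variables (n N : nat) (p : R).
Hypothesis Hp : 0 <= p <= 1.

Lemma weight_ge0 (w : config n N) : 0 <= weight p w.
Proof. rewrite /weight; elim/big_ind: _ => //; [lra| move=> *; nra| move=> k _; case: (w k); lra]. Qed.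

Lemma prob_markov (E : config n N -> Prop) (f : config n N -> R) :
  (forall w, 0 <= f w) -> (forall w, E w -> 1 <= f w) ->
  prob p E <= rsum (fun w => weight p w * f w).
Proof.
move=> H0 H1; apply: rsum_le => w.
have := weight_ge0 w; have := H0 w.
move=> ? ?; dem; [have := H1 _ e|]; nra.
Qed.

Lemma prob_mono (E F : config n N -> Prop) : (forall w, E w -> F w) -> prob p E <= prob p F.
Proof.
move=> H; apply: rsum_le => w; have := weight_ge0 w.
dem; try lra; exfalso; auto.
Qed.

Lemma prob_le1 (E : config n N -> Prop) : prob p E <= 1.
Proof.
apply: Rle_trans (_ : rsum (fun w => weight p w) <= 1).
  apply: rsum_le => w; have := weight_ge0 w; dem; lra.
have -> : rsum (fun w : config n N => weight p w) = \big[Rmult/1]_(k : 'I_n * 'I_N) (p + (1 - p)).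
  rewrite /rsum /weight -(bigA_distr_bigA (fun (k : 'I_n * 'I_N) (b : bool) => if b then p else 1 - p)); apply: eq_bigr => k _; by rewrite big_bool.
rewrite (eq_bigr (fun _ => 1)) ?big1_eq //; first lra. move=> *; ring.
Qed.

Lemma prob_union2 (E F : config n N -> Prop) : prob p (fun w => E w \/ F w) <= prob p E + prob p F.
Proof.
rewrite /prob -rsumD; apply: rsum_le => w; have := weight_ge0 w.
dem; try lra; tauto.
Qed.

Lemma prob_unionN (E : 'I_N -> config n N -> Prop) :
  prob p (fun w => exists j, E j w) <= rsum (fun j => prob p (E j)).
Proof.
rewrite /prob /rsum exchange_big /=; apply: rsum_le => w.
destruct (excluded_middle_informative (exists j, E j w)) as [[j Hj]|Hn]; last first.
  by apply: rsum_ge0 => j; have := weight_ge0 w; dem; lra.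
rewrite (bigD1 j) //=; destruct (excluded_middle_informative (E j w)) => //=.
match goal with |- _ <= _ + ?S => have HH : 0 <= S; last lra end.
elim/big_ind: _ => //; [lra | move=> *; lra | move=> i _; have := weight_ge0 w; dem; lra].
Qed.

Lemma mgf (g : 'I_n * 'I_N -> bool -> R) :
  rsum (fun w : config n N => weight p w * \big[Rmult/1]_(k : 'I_n * 'I_N) g k (w k)) =
  \big[Rmult/1]_(k : 'I_n * 'I_N) (p * g k true + (1 - p) * g k false).
Proof.
rewrite /rsum (eq_bigr (fun w : config n N => \big[Rmult/1]_(k : 'I_n * 'I_N) ((if w k then p else 1 - p) * g k (w k)))); last first.
  by move=> w _; rewrite /weight big_split.
rewrite -(bigA_distr_bigA (fun (k : 'I_n * 'I_N) (b : bool) => (if b then p else 1 - p) * g k b)); apply: eq_bigr => k _; by rewrite big_bool.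
Qed.

End Prob.

Section Cnt.
Variables (n N : nat) (p : R).
Hypothesis Hp : 0 <= p <= 1.

Definition cnt (c : 'I_n * 'I_N -> bool) (w : config n N) : R :=
  rsum (fun k => if c k && w k then 1 else 0).
Definition msz (c : 'I_n * 'I_N -> bool) : R := rsum (fun k : 'I_n * 'I_N => if c k then 1 else 0).

Lemma mgf_cnt (mu : R) c :
  rsum (fun w : config n N => weight p w * exp (mu * cnt c w)) <= exp (p * (exp mu - 1) * msz c).
Proof.
rewrite (rsum_ext (G := fun w : config n N => weight p w *
   \big[Rmult/1]_(k : 'I_n * 'I_N) (fun k b => exp (mu * (if c k && b then 1 else 0))) k (w k))); last first.
  by move=> w; rewrite /cnt -rsumZ exp_rsum.
rewrite (@mgf n N p (fun k b => exp (mu * (if c k && b then 1 else 0)))) /msz -rsumZ exp_rsum.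
apply prod_le => k; case: (c k) => /=; rewrite ?Rmult_0_r ?Rmult_1_r ?exp_0.
  have := exp_ineq1_le (p * (exp mu - 1)); have := exp_pos mu; nra.
lra.
Qed.
End Cnt.

Lemma exp_up (l : R) : 0 <= l <= 1/2 -> exp l <= 1 + l + 2 * l ^ 2.
Proof.
move=> Hl; have H1 := exp_ineq1_le (- l).
have H2 : exp l * exp (- l) = 1 by rewrite -exp_plus Rplus_opp_r exp_0.
have H3 := exp_pos l. nra.
Qed.
Lemma exp_dn (l : R) : 0 <= l <= 1/2 -> exp (- l) <= 1 - l + 2 * l ^ 2.
Proof.
move=> Hl; have H1 := exp_ineq1_le l.
have H2 : exp l * exp (- l) = 1 by rewrite -exp_plus Rplus_opp_r exp_0.
have H3 := exp_pos (- l). nra.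
Qed.
Lemma one_le_exp x : 0 <= x -> 1 <= exp x.
Proof. move=> H; have := exp_ineq1_le x; lra. Qed.

Lemma exp_mono x y : x <= y -> exp x <= exp y.
Proof. move=> H; case: (Rle_lt_or_eq_dec _ _ H) => [/exp_increasing|->]; lra. Qed.

Section Chernoff.
Variables (n N : nat) (p : R).
Hypothesis Hp : 0 <= p <= 1.

Lemma msz_ge0 c : 0 <= @msz n N c.
Proof. apply: rsum_ge0 => k; case: (c k); lra. Qed.

Lemma mgf_shift (mu a : R) c :
  rsum (fun w : config n N => weight p w * exp (mu * cnt c w + a)) <= exp (a + p * (exp mu - 1) * msz c).
Proof.
rewrite exp_plus (rsum_ext (G := fun w => exp a * (weight p w * exp (mu * cnt c w)))); last first.
  by move=> w; rewrite exp_plus; ring.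
rewrite rsumZ; apply: Rmult_le_compat_l; first by have := exp_pos a; lra.
exact: mgf_cnt.
Qed.

Lemma chernoff_up (c : 'I_n * 'I_N -> bool) t l : 0 < l <= 1/2 ->
  prob p (fun w : config n N => t <= cnt c w - p * msz c) <= exp (2 * p * msz c * l ^ 2 - l * t).
Proof.
move=> Hl.
have Hm := msz_ge0 c.
have H1 : prob p (fun w : config n N => t <= cnt c w - p * msz c) <=
   rsum (fun w : config n N => weight p w * exp (l * cnt c w + (- l * (p * msz c + t)))).
  apply: prob_markov => // w; first by have := exp_pos (l * cnt c w + - l * (p * msz c + t)); lra.
  move=> Hw; apply: one_le_exp; nra.
apply: Rle_trans H1 _; apply: Rle_trans (mgf_shift _ _ _) _.
apply: exp_mono; have := exp_up (conj (Rlt_le _ _ (proj1 Hl)) (proj2 Hl)).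
have : 0 <= p * msz c by nra. nra.
Qed.

Lemma chernoff_dn (c : 'I_n * 'I_N -> bool) t l : 0 < l <= 1/2 ->
  prob p (fun w : config n N => t <= p * msz c - cnt c w) <= exp (2 * p * msz c * l ^ 2 - l * t).
Proof.
move=> Hl.
have Hm := msz_ge0 c.
have H1 : prob p (fun w : config n N => t <= p * msz c - cnt c w) <=
   rsum (fun w : config n N => weight p w * exp ((- l) * cnt c w + (l * (p * msz c - t)))).
  apply: prob_markov => // w; first by have := exp_pos ((- l) * cnt c w + l * (p * msz c - t)); lra.
  move=> Hw; apply: one_le_exp; nra.
apply: Rle_trans H1 _; apply: Rle_trans (mgf_shift _ _ _) _.
apply: exp_mono; have := exp_dn (conj (Rlt_le _ _ (proj1 Hl)) (proj2 Hl)).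
have : 0 <= p * msz c by nra. nra.
Qed.
End Chernoff.

Lemma INR_card (I : finType) (P : pred I) : INR #|P| = rsum (fun i => if P i then 1 else 0).
Proof.
rewrite -sum1_card big_mkcond /rsum.
rewrite (big_morph INR (fun a b => plus_INR a b) (erefl (INR 0))).
change (INR 0) with 0.
by apply: eq_bigr => i _; rewrite /in_mem /=; case: (P i).
Qed.

Lemma rsum_pair (n N : nat) (G : 'I_n * 'I_N -> R) :
  rsum G = rsum (fun i => rsum (fun j => G (i, j))).
Proof.
rewrite /rsum pair_bigA; apply: eq_bigr => -[i j] _ //.
Qed.

Definition colc (n N : nat) (j : 'I_N) : 'I_n * 'I_N -> bool := fun k => k.2 == j.
Definition allc (n N : nat) : 'I_n * 'I_N -> bool := fun _ => true.

Lemma rsum_delta (N : nat) (j : 'I_N) (F : 'I_N -> R) :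
  rsum (fun j' => if j' == j then F j' else 0) = F j.
Proof.
rewrite /rsum (bigD1 j) //= eqxx big1; first lra.
by move=> i /negbTE ->.
Qed.

Lemma F1 (n N : nat) (w : config n N) j : INR (ncol w j) = cnt (@colc n _ j) w.
Proof.
rewrite /ncol INR_card /cnt rsum_pair; apply: rsum_ext => i /=.
rewrite /colc /= (rsum_ext (G := fun j' => if j' == j then (if w (i, j') then 1 else 0) else 0)).
  by rewrite rsum_delta.
by move=> j'; case: (j' == j).
Qed.

Lemma F2 (n N : nat) (j : 'I_N) : msz (@colc n _ j) = INR n.
Proof.
rewrite /msz rsum_pair (rsum_ext (G := fun _ => 1)); first by rewrite rsum_const; ring.
move=> i /=; rewrite /colc /= (rsum_ext (G := fun j' => if j' == j then 1 else 0)) ?rsum_delta //.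
Qed.

Lemma F3 (n N : nat) : msz (@allc n N) = INR n * INR N.
Proof.
rewrite /msz rsum_pair (rsum_ext (G := fun _ => INR N)); first by rewrite rsum_const.
by move=> i /=; rewrite /allc rsum_const; ring.
Qed.

Lemma rsum_exch (I J : finType) (F : I -> J -> R) :
  rsum (fun i => rsum (fun j => F i j)) = rsum (fun j => rsum (fun i => F i j)).
Proof. exact: exchange_big. Qed.

Lemma F4 (n N : nat) (w : config n N) : rsum (fun j => cnt (@colc n _ j) w) = cnt (@allc n N) w.
Proof.
rewrite /cnt rsum_exch; apply: rsum_ext => k.
rewrite /colc /allc /=.
transitivity (rsum (fun j' => if j' == k.2 then (fun _ => if w k then 1 else 0) j' else 0)).
  apply: rsum_ext => j'; rewrite [j' == k.2]eq_sym; by case: (k.2 == j').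
by rewrite rsum_delta.
Qed.

Lemma entry_bound x m p a : 0 < m -> 0 < p < 1 -> 0 < a <= 1 - p -> (1 - p) * m / 2 <= m - x ->
  (x / (m - x) - p / (1 - p)) ^ 2 <= 4 * (x - p * m) ^ 2 / (a ^ 4 * m ^ 2).
Proof.
move=> Hm Hp Ha Hx.
have Hy : 0 < m - x by nra.
have E : x / (m - x) - p / (1 - p) = (x - p * m) * / ((m - x) * (1 - p)) by field; lra.
rewrite E.
set d := x - p * m; set Q := (m - x) * (1 - p).
have HQ0 : 0 < a ^ 2 * m / 2 by have := pow_lt a 2 (proj1 Ha); nra.
have HQ : a ^ 2 * m / 2 <= Q.
  have H1 : a ^ 2 <= (1 - p) ^ 2 by apply: pow_incr; lra.
  have H2 : (1 - p) * m / 2 * (1 - p) <= Q by rewrite /Q; apply: Rmult_le_compat_r; lra.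
  nra.
have Hinv := Rinv_le_contravar _ _ HQ0 HQ.
have HQp : 0 < / Q by apply: Rinv_0_lt_compat; lra.
have E2 : (d * / Q) ^ 2 = d ^ 2 * (/ Q) ^ 2 by ring.
have E3 : 4 * d ^ 2 / (a ^ 4 * m ^ 2) = d ^ 2 * (/ (a ^ 2 * m / 2)) ^ 2.
  field; repeat split; lra.
rewrite E2 E3; apply: Rmult_le_compat_l; first exact: pow2_ge_0.
apply: pow_incr; lra.
Qed.

Lemma div_le_l a b c : 0 < b -> a <= c * b -> a / b <= c.
Proof.
move=> Hb H; have E : a / b = a * / b by [].
have Hi : 0 < / b by apply: Rinv_0_lt_compat.
have : c * b * / b = c by field; lra.
rewrite E; nra.
Qed.

Lemma choose_tau (N : nat) (m L p a s2 : R) :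
  1 <= m -> 2 <= INR N -> 1/2 < L -> 0 < p -> p <= 1 - a -> 0 < a <= 1 -> p <= s2 ->
  192 / a^2 * L <= m ->
  exists tau l, 0 < l <= 1/2 /\ 2 * p * m * l^2 - l * tau <= - (6 * L) /\ tau <= a * m / 2 /\
   forall d : 'I_N -> R, (forall j, - tau < d j < tau) -> (forall j, 0 <= d j + p * m) ->
     rsum (fun j => d j + p * m) <= 2 * p * m * INR N + 12 * L ->
     4 / (a ^ 4 * m) * rsum (fun j => d j ^ 2) <= 6000 / a ^ 4 * (s2 * INR N * L ^ 2 + L ^ 3).
Proof.
move=> Hm HN HL Hp Hpa Ha Hs HC.
have Ha2 : 0 < a ^ 2 by apply: pow_lt; lra.
have Ha4 : 0 < a ^ 4 by apply: pow_lt; lra.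
have HLm : 192 * L <= a ^ 2 * m.
  have E : 192 / a ^ 2 * L * a ^ 2 = 192 * L by field; lra.
  have := Rmult_le_compat_r _ _ _ (Rlt_le _ _ Ha2) HC; rewrite E; nra.
have Hfin : forall S, 4 * S <= 6000 * (s2 * INR N * L ^ 2 + L ^ 3) * m ->
   4 / (a ^ 4 * m) * S <= 6000 / a ^ 4 * (s2 * INR N * L ^ 2 + L ^ 3).
  move=> S HS.
  have Hi : 0 <= / (a ^ 4 * m) by apply: Rlt_le; apply: Rinv_0_lt_compat; nra.
  have E1 : 4 / (a ^ 4 * m) * S = (4 * S) * / (a ^ 4 * m) by field; split; lra.
  have E2 : 6000 / a ^ 4 * (s2 * INR N * L ^ 2 + L ^ 3) =
     (6000 * (s2 * INR N * L ^ 2 + L ^ 3) * m) * / (a ^ 4 * m) by field; split; lra.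
  rewrite E1 E2; exact: Rmult_le_compat_r.
have HL2 : L <= 2 * L ^ 2 by nra.
have HNp : 0 <= INR N by lra.
case: (Rle_lt_dec (12 * L) (p * m)) => Hc.
-
  have Hpm : 0 < p * m by nra.
  have Hx : 0 < 3 * L / (p * m) by apply: Rdiv_lt_0_compat; lra.
  exists (4 * sqrt (3 * p * m * L)), (sqrt (3 * L / (p * m))).
  have Hl2 : sqrt (3 * L / (p * m)) ^ 2 = 3 * L / (p * m) by apply: pow2_sqrt; lra.
  have Hlt : sqrt (3 * L / (p * m)) * sqrt (3 * p * m * L) = 3 * L.
    rewrite -sqrt_mult; [|lra|nra].
    have -> : 3 * L / (p * m) * (3 * p * m * L) = (3 * L) ^ 2 by field; lra.
    apply: sqrt_pow2; lra.
  have Ht2 : (4 * sqrt (3 * p * m * L)) ^ 2 = 48 * p * m * L.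
    have : sqrt (3 * p * m * L) ^ 2 = 3 * p * m * L by apply: pow2_sqrt; nra.
    move=> H; transitivity (16 * sqrt (3 * p * m * L) ^ 2); [ring | rewrite H; ring].
  have Ht0 : 0 <= sqrt (3 * p * m * L) := sqrt_pos _.
  split; [split|split; [|split]].
  + exact: sqrt_lt_R0.
  + rewrite -(sqrt_pow2 (1/2)); last lra.
    apply: sqrt_le_1_alt; apply: div_le_l; lra.
  + have E : 2 * p * m * sqrt (3 * L / (p * m)) ^ 2 = 6 * L by rewrite Hl2; field; lra.
    have E' : sqrt (3 * L / (p * m)) * (4 * sqrt (3 * p * m * L)) = 12 * L.
      transitivity (4 * (sqrt (3 * L / (p * m)) * sqrt (3 * p * m * L))); [ring | rewrite Hlt; ring].
    rewrite E E'; lra.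
  + have H1 : (4 * sqrt (3 * p * m * L)) ^ 2 <= (a * m / 2) ^ 2 by rewrite Ht2; nra.
    have H2 : 0 <= a * m / 2 by nra.
    nra.
  + move=> d Hd Hd0 HT; apply: Hfin.
    have HS : rsum (fun j => d j ^ 2) <= rsum (fun j : 'I_N => 48 * p * m * L).
      apply: rsum_le => j; have := Hd j; rewrite -Ht2 => Hj; nra.
    rewrite rsum_const in HS.
    have H3 : p * m * INR N * L <= s2 * INR N * L ^ 2 * m * 2.
      have H5 : p * L <= s2 * (2 * L ^ 2) by apply: Rmult_le_compat; lra.
      have := Rmult_le_compat_r (m * INR N) _ _ (ltac:(nra)) H5; nra.
    have H4 : 0 <= L ^ 3 * m by apply: Rmult_le_pos; [apply: pow_le|]; lra.
    move: HS; set S := rsum (fun j => d j ^ 2) => HS; nra.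
-
  exists (p * m + 12 * L), (1/2).
  split; [lra|split; [lra|split]].
  + nra.
  + move=> d Hd Hd0 HT; apply: Hfin.
    have HS : rsum (fun j => d j ^ 2) <= rsum (fun j => (p * m + 12 * L) * ((d j + p * m) + p * m)).
      apply: rsum_le => j; have := Hd j; have := Hd0 j => H0 Hj.
      have Hpm0 : 0 <= p * m by nra.
      have Ht : 0 <= p * m + 12 * L by lra.
      case: (Rle_lt_dec 0 (d j)) => Hdj; nra.
    rewrite rsumZ rsumD rsum_const in HS.
    have H1 : rsum (fun j => d j + p * m) + INR N * (p * m) <= 3 * p * m * INR N + 12 * L by lra.
    have H2 : rsum (fun j => d j ^ 2) <= 24 * L * (3 * p * m * INR N + 12 * L).
      have Hpm0 : 0 <= p * m by nra.
      have HB0 : 0 <= rsum (fun j => d j + p * m) + INR N * (p * m).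
        apply: Rplus_le_le_0_compat; last nra.
        by apply: rsum_ge0 => j; apply: Hd0.
      apply: Rle_trans HS _; apply: Rmult_le_compat; lra.
    have H3 : p * m * INR N * L <= s2 * INR N * L ^ 2 * m * 2.
      have H5 : p * L <= s2 * (2 * L ^ 2) by apply: Rmult_le_compat; lra.
      have := Rmult_le_compat_r (m * INR N) _ _ (ltac:(nra)) H5; nra.
    have H4 : L ^ 2 <= 2 * L ^ 3 * m.
      have : L ^ 2 * 1 <= L ^ 2 * (2 * L * m) by apply: Rmult_le_compat_l; nra.
      nra.
    move: H2; set S := rsum (fun j => d j ^ 2) => H2.
    have E1 : 24 * L * (3 * p * m * INR N + 12 * L) = 72 * (p * m * INR N * L) + 288 * L ^ 2 by ring.
    have E2 : 6000 * (s2 * INR N * L ^ 2 + L ^ 3) * m = 6000 * (s2 * INR N * L ^ 2 * m) + 6000 * (L ^ 3 * m) by ring.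
    rewrite E2; rewrite E1 in H2.
    have E3 : s2 * INR N * L ^ 2 * m * 2 = 2 * (s2 * INR N * L ^ 2 * m) by ring.
    have E4 : 2 * L ^ 3 * m = 2 * (L ^ 3 * m) by ring.
    rewrite E3 in H3; rewrite E4 in H4.
    have H6 : 0 <= s2 * INR N * L ^ 2 * m by have := Rmult_le_pos _ _ (Rle_trans _ _ _ (Rlt_le _ _ Hp) Hs) HNp; nra.
    lra.
Qed.

Lemma exp_m6 (NN : R) : 0 < NN -> exp (- (6 * ln NN)) = / NN ^ 6.
Proof.
move=> H; rewrite exp_Ropp.
have -> : 6 * ln NN = ln (NN ^ 6) by rewrite ln_pow //; simpl; ring.
by rewrite exp_ln //; apply: pow_lt.
Qed.

Theorem lemma5 :
  forall p0 : R, (0 < p0 < 1)%R ->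
  exists C0 c1 c2 : R, (0 < C0)%R /\ (0 < c1)%R /\ (0 < c2)%R /\
    forall (n N : nat) (p : R),
      (1 <= n)%nat -> (n <= N)%nat ->
      (C0 * ln (INR N) <= INR n)%R ->
      (0 < p <= p0)%R ->
      (@prob n N p
         (fun w => opnorm (fun i j => (@Amat n N p w i j - @Atil n N w i j)%R) >=
                   c1 * Rmax (sqrt (sigma2 p * INR N) * ln (INR N))
                             (sqrt (ln (INR N) ^ 3)))
       <= c2 * / (INR N ^ 5))%R.
Proof.
move=> p0 [Hp0 Hp01].
set a := 1 - p0.
have Ha : 0 < a <= 1 by rewrite /a; lra.
have Ha4 : 0 < a ^ 4 by apply: pow_lt; lra.
set Kc := 6000 / a ^ 4.
have HKc : 0 < Kc by apply: Rdiv_lt_0_compat; lra.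
exists (192 / a ^ 2), (2 * sqrt Kc), 3.
split; first by apply: Rdiv_lt_0_compat; [lra | apply: pow_lt; lra].
split; first by have := sqrt_lt_R0 _ HKc; lra.
split; first lra.
move=> n N p Hn HnN HC Hp.
have HNleq : leq 1 N := leq_trans Hn HnN.
have Hn' : (1 <= n)%coq_nat by apply/leP.
have HN' : (1 <= N)%coq_nat by apply/leP.
have Hm1 : 1 <= INR n by have := le_INR _ _ Hn'; simpl.
have Hpp : 0 <= p <= 1 by lra.
have Hap : a <= 1 - p by rewrite /a; lra.
destruct (Nat.eq_dec N 1) as [EN|HN2].
  subst N.
  have := prob_le1 Hpp (fun w => opnorm (fun i j => (@Amat n 1 p w i j - @Atil n 1 w i j)%R) >=
                   2 * sqrt Kc * Rmax (sqrt (sigma2 p * INR 1) * ln (INR 1))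
                             (sqrt (ln (INR 1) ^ 3))).
  have -> : INR 1 ^ 5 = 1 by simpl; ring.
  rewrite Rinv_1; lra.
have HNR : 2 <= INR N by have := le_INR 2 N ltac:(lia); simpl; lra.
set NN := INR N in HNR *.
set L := ln NN in HC *.
have HL : / 2 < L.
  case: (Rle_lt_or_eq_dec 2 NN HNR) => [lt | eq].
    have := ln_increasing 2 NN ltac:(lra) lt; have := ln_lt_2; rewrite /L; lra.
  rewrite /L -eq; exact: ln_lt_2.
set m := INR n in Hm1 HC *.
have Hs : p <= sigma2 p.
  rewrite /sigma2 /Rdiv.
  have := Rinv_le_contravar (1 - p) 1 ltac:(lra) ltac:(lra); rewrite Rinv_1; nra.
have [tau [l [Hl [Hexp [Htau Hsum]]]]] :=
  @choose_tau N m L p a (sigma2 p) Hm1 HNR ltac:(lra) (proj1 Hp) ltac:(rewrite /a; lra) Ha Hs HC.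
set A := sqrt (sigma2 p * NN) * L.
set Bq := sqrt (L ^ 3).
set thr := 2 * sqrt Kc * Rmax A Bq.
have HNp : 0 < NN by lra.
have HL0 : 0 < L by lra.
have Hs0 : 0 <= sigma2 p by lra.
pose B1 := fun j (w : config n N) => tau <= cnt (@colc n _ j) w - p * msz (@colc n _ j).
pose B2 := fun j (w : config n N) => tau <= p * msz (@colc n _ j) - cnt (@colc n _ j) w.
pose t3 := p * msz (@allc n N) + 12 * L.
pose B3 := fun w : config n N => t3 <= cnt (@allc n N) w - p * msz (@allc n N).
apply: Rle_trans (prob_mono Hpp (F := fun w => (exists j, B1 j w) \/ ((exists j, B2 j w) \/ B3 w)) _) _.
  move=> w Hw; apply: NNPP => Hno.
  have nB1 : forall j, ~ B1 j w by move=> j Hj; apply: Hno; left; exists j.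
  have nB2 : forall j, ~ B2 j w by move=> j Hj; apply: Hno; right; left; exists j.
  have nB3 : ~ B3 w by move=> Hj; apply: Hno; right; right.
  set x := fun j => INR (ncol w j).
  have Hd : forall j, - tau < x j - p * m < tau.
    move=> j; have := nB1 j; have := nB2 j; rewrite /B1 /B2 /x F1 F2 -/m; lra.
  have Hd0 : forall j, 0 <= x j - p * m + p * m by move=> j; have := pos_INR (ncol w j); rewrite /x; lra.
  have HT : rsum (fun j => x j - p * m + p * m) <= 2 * p * m * NN + 12 * L.
    rewrite (rsum_ext (G := fun j => cnt (@colc n _ j) w)); last by move=> j; rewrite /x F1; ring.
    rewrite F4; move: nB3; rewrite /B3 /t3 F3 -/m -/NN; lra.
  have Hfro := Hsum (fun j => x j - p * m) Hd Hd0 HT.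
  have Hm0 : 0 < m by lra.
  have Hent : forall i j, (Amat p w i j - Atil w i j) ^ 2 <= 4 * (x j - p * m) ^ 2 / (a ^ 4 * m ^ 2).
    move=> i j; rewrite /Amat /Atil.
    have Hq : 0 <= 4 * (x j - p * m) ^ 2 / (a ^ 4 * m ^ 2).
      apply: Rmult_le_pos; first by apply: Rmult_le_pos; [lra | apply: pow2_ge_0].
      apply: Rlt_le; apply: Rinv_0_lt_compat; have := pow_lt m 2 Hm0; nra.
    case: (w (i, j)); first by have -> : (1 - 1) ^ 2 = 0 by ring.
    have E : - sigma2 p - - (INR (ncol w j) / (INR n - INR (ncol w j))) =
             x j / (m - x j) - p / (1 - p) by rewrite /sigma2 /x -/m; ring.
    rewrite E; apply: entry_bound; try lra.
    have := Hd j; have : a * m <= (1 - p) * m by apply: Rmult_le_compat_r; lra.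
    lra.
  set M := fun i j => (Amat p w i j - Atil w i j).
  set F := rsum (fun i => rsum (fun j => M i j ^ 2)).
  have HF0 : 0 <= F by apply: rsum_ge0 => i; apply: rsum_ge0 => j; apply: pow2_ge_0.
  have HFb : F <= Kc * (sigma2 p * NN * L ^ 2 + L ^ 3).
    apply: Rle_trans Hfro.
    apply: Rle_trans (_ : F <= rsum (fun i : 'I_n => rsum (fun j => 4 * (x j - p * m) ^ 2 / (a ^ 4 * m ^ 2)))) _.
      by apply: rsum_le => i; apply: rsum_le => j; apply: Hent.
    rewrite rsum_const -/m (rsum_ext (G := fun j => (4 / (a ^ 4 * m ^ 2)) * (x j - p * m) ^ 2)); last first.
      by move=> j; rewrite /Rdiv; ring.
    rewrite rsumZ; apply: Req_le; field; lra.
  have Hop : opnorm M <= sqrt F.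
    apply: opnorm_le => //; first exact: sqrt_pos.
    by rewrite pow2_sqrt //; apply: Req_le.
  have HL3 : 0 < L ^ 3 by apply: pow_lt.
  have HA0 : 0 <= A by apply: Rmult_le_pos; [apply: sqrt_pos | lra].
  have HB0 : 0 <= Bq by apply: sqrt_pos.
  have HA2 : A ^ 2 = sigma2 p * NN * L ^ 2.
    rewrite /A; transitivity (sqrt (sigma2 p * NN) ^ 2 * L ^ 2); first ring.
    by rewrite pow2_sqrt //; nra.
  have HB2 : Bq ^ 2 = L ^ 3 by rewrite /Bq pow2_sqrt //; lra.
  have HR1 := Rmax_l A Bq; have HR2 := Rmax_r A Bq.
  have HRA : A ^ 2 <= Rmax A Bq ^ 2 by apply: pow_incr; lra.
  have HRB : Bq ^ 2 <= Rmax A Bq ^ 2 by apply: pow_incr; lra.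
  have Hthr2 : thr ^ 2 = 4 * Kc * Rmax A Bq ^ 2.
    rewrite /thr; transitivity (4 * sqrt Kc ^ 2 * Rmax A Bq ^ 2); first ring.
    by rewrite pow2_sqrt //; lra.
  have Hthr0 : 0 <= thr by rewrite /thr; apply: Rmult_le_pos; [have := sqrt_pos Kc; lra | lra].
  have HZ1 : 0 <= sigma2 p * NN * L ^ 2.
    apply: Rmult_le_pos; [apply: Rmult_le_pos; lra | apply: pow_le; lra].
  have HZ : 0 < sigma2 p * NN * L ^ 2 + L ^ 3 by lra.
  have HFt : F < thr ^ 2 by rewrite Hthr2; nra.
  have : sqrt F < thr by rewrite -(sqrt_pow2 thr Hthr0); apply: sqrt_lt_1_alt; lra.
  move: Hw; rewrite -/M; lra.
have Hl' : 0 < l <= 1/2 := Hl.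
have He6 : exp (- (6 * L)) = / NN ^ 6 by rewrite /L; apply: exp_m6.
have HB1 : forall j, prob p (B1 j) <= / NN ^ 6.
  move=> j; apply: Rle_trans (chernoff_up Hpp (@colc n _ j) tau Hl') _.
  rewrite F2 -/m -He6; exact: exp_mono.
have HB2 : forall j, prob p (B2 j) <= / NN ^ 6.
  move=> j; apply: Rle_trans (chernoff_dn Hpp (@colc n _ j) tau Hl') _.
  rewrite F2 -/m -He6; exact: exp_mono.
have HB3 : prob p B3 <= / NN ^ 6.
  have Hh : 0 < 1/2 <= 1/2 by lra.
  apply: Rle_trans (chernoff_up Hpp (@allc n N) t3 Hh) _.
  rewrite -He6 /t3; apply: exp_mono; lra.
have HU1 : prob p (fun w => exists j, B1 j w) <= NN * / NN ^ 6.
  apply: Rle_trans (prob_unionN Hpp B1) _.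
  apply: Rle_trans (rsum_le (G := fun _ => / NN ^ 6) HB1) _.
  by rewrite rsum_const; apply: Req_le.
have HU2 : prob p (fun w => exists j, B2 j w) <= NN * / NN ^ 6.
  apply: Rle_trans (prob_unionN Hpp B2) _.
  apply: Rle_trans (rsum_le (G := fun _ => / NN ^ 6) HB2) _.
  by rewrite rsum_const; apply: Req_le.
apply: Rle_trans (prob_union2 Hpp _ _) _.
apply: Rle_trans (Rplus_le_compat_l _ _ _ (prob_union2 Hpp _ _)) _.
have E1 : NN * / NN ^ 6 = / NN ^ 5 by field; lra.
have E2 : / NN ^ 6 = / NN ^ 5 * / NN by field; lra.
have H5 : 0 < / NN ^ 5 by apply: Rinv_0_lt_compat; apply: pow_lt; lra.
have Hi : / NN <= 1 by rewrite -Rinv_1; apply: Rinv_le_contravar; lra.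
have : / NN ^ 6 <= / NN ^ 5 by rewrite E2; nra.
lra.
Qed.
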